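(* Under the standing assumptions below, if $F\in\mathcal N$ satisfies $\mathcal B(F)=F$, then $F(\gamma,x,s)\le D(\gamma,x,s)$ for all $\gamma\in\mathbb R^I_+$, $x\in\mathcal X$, $s\in\mathcal S$.
   Context: Setup. Let $\mathcal S$ be a finite set and $(s_t)_{t\ge0}$ a Markov chain on $\mathcal S$ with transition probabilities $\pi(s'|s)>0$ for all $s,s'\in\mathcal S$; for $s^t=(s_0,\dots,s_t)\in\mathcal S^{t+1}$ write $\pi^t(s^t|s_0)$ for its probability given $s_0$ and $\mathbb E_{s_t}$ for expectation over future shocks given $s^t$. Let $\mathcal A\subset\mathbb R^n$ be a finite set, $\mathcal X\subseteq\mathbb R^m$ a countable set, $\zeta:\mathcal X\times\mathcal A\times\mathcal S\to\mathcal X$, $p:\mathcal X\times\mathcal A\times\mathcal S\to\mathbb R$, $r,g^1,\dots,g^I$ bounded real functions on $\mathcal X\times\mathcal A\times\mathcal S$, $\bar g^i\in\mathbb R$, $\beta\in(0,1)$. A plan is $a=(a(s^t))_{t,s^t}$, $a(s^t)\in\mathcal A$, inducing $x(s^0)=x_0$, $x(s^{t+1})=\zeta(x(s^t),a(s^t),s_t)$. $\tilde{\mathcal A}(x,s)=\{a\in\mathcal A:p(x,a,s)\ge0\}$; $\tilde{\mathcal A}^\infty(x_0)$ is the set of plans with $a(s^t)\in\tilde{\mathcal A}(x(s^t),s_t)$ for all $t,s^t$. A plan is feasible for $(x_0,s_0)$ if it lies in $\tilde{\mathcal A}^\infty(x_0)$ and $\mathbb E_{s_t}\sum_{n\ge0}\beta^ng^i(x(s^{t+n}),a(s^{t+n}),s_{t+n})\ge\bar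 g^i$ for all $t,s^t,i$. Standing assumption: for every $(x_0,s_0)$ a feasible plan exists. Pre-action histories $h^t=(s_0,a_0,\dots,s_{t-1},a_{t-1},s_t)\in\mathcal H^t=\mathcal S^{t+1}\times\mathcal A^t$; a plan generates $h^t=(s_0,a(s^0),\dots,a(s^{t-1}),s_t)$ along $s^t$. Dual value: $\Lambda$ is the set of $(\lambda^i(h^t))_{t,h^t,i}$, $\lambda^i(h^t)\ge0$, $\sum_t\sum_{h^t}\sum_i\beta^t\lambda^i(h^t)\pi^t(s^t|s_0)<\infty$. $L(a,\lambda;\gamma,x_0,s_0)=\mathbb E_{s_0}\sum_t\beta^t\big[r(x(s^t),a(s^t),s_t)+\sum_i\gamma^ig^i(x(s^t),a(s^t),s_t)+\sum_i\lambda^i(h^t)(\sum_{n\ge0}\beta^ng^i(x(s^{t+n}),a(s^{t+n}),s_{t+n})-\bar g^i)\big]$ and $D(\gamma,x_0,s_0)=\inf_{\lambda\in\Lambda}\sup_{a\in\tilde{\mathcal A}^\infty(x_0)}L$. Function spaces. $L=(\|r\|_\infty+\sum_i\|g^i\|_\infty)/(1-\beta)$ (a constant, not to be confused with the Lagrangian), $B(k)=\{\gamma\in\mathbb R^I_+:\|\gamma\|_\infty\le k\}$, $\mathcal S=\{s_1,\dots,s_{|\mathcal S|}\}$, $\mathcal X=\{x_1,x_2,\dots\}$. $\mathcal M$: functions $F:\mathbb R^I_+\times\mathcal X\times\mathcal S\to\mathbb R$ with $F(\cdot,x,s)\in L^\infty(B(k))$ for all $k$ and $\|F\|_{\mathcal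 M}=\sum_i2^{-i}\sum_j2^{-j}\sum_{k\ge1}2^{-k}\|F(\cdot,x_j,s_i)\|_{L^\infty(B(k))}<\infty$. $\mathcal N$: those $F\in\mathcal M$ with, for all $x,s$, (i) $F(\cdot,x,s)$ convex; (ii) $|F(\gamma_1,x,s)-F(\gamma_2,x,s)|\le L\|\gamma_1-\gamma_2\|_1$; (iii) $F(\gamma,x,s)\ge v^0+\sum_i\gamma^iv^i$ for every feasible plan for $(x,s)$, $v^0=\mathbb E_s\sum_t\beta^tr(\cdot)$, $v^i=\mathbb E_s\sum_t\beta^tg^i(\cdot)$; (iv) $F(\gamma,x,s)\le(1+\sum_i\gamma^i)L$. Bellman operator: $\mathcal B(F)(\gamma,x,s)=\inf_{\lambda\in\mathbb R^I_+}\sup_{a\in\tilde{\mathcal A}(x,s)}\big[r(x,a,s)+\sum_i(\gamma^ig^i(x,a,s)+\lambda^i(g^i(x,a,s)-\bar g^i))+\beta\mathbb E_sF(\gamma+\lambda,\zeta(x,a,s),s')\big]$, $s'\sim\pi(\cdot|s)$. *)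

(* Defs.v *)
From mathcomp Require Import all_boot all_order all_algebra.
From mathcomp Require Import all_classical all_reals all_analysis.
Import numFieldNormedType.Exports.
Import Order.TTheory GRing.Theory Num.Theory.

Set Implicit Arguments.
Unset Strict Implicit.
Unset Printing Implicit Defensive.

Local Open Scope classical_set_scope.
Local Open Scope ring_scope.

Definition rsum (R : realType) (u : nat -> R) : R := limn (series u).

Section Model.
Variables (R : realType) (S A : finType) (X : Type) (nI : nat).
Variables (pi : S -> S -> R)                (* pi s s' = pi(s'|s) *)
          (zeta : X -> A -> S -> X)
          (p r : X -> A -> S -> R)
          (g : 'I_nI -> X -> A -> S -> R)
          (gbar : 'I_nI -> R)
          (beta : R).

(* A plan assigns an action to every shock history s^t = (s_0,...,s_t),
   represented as the (nonempty) sequence [:: s_0; ...; s_t]. *)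
Definition plan := seq S -> A.

(* State along a history: x(s^0) = x0, x(s^{t+1}) = zeta(x(s^t), a(s^t), s_t). *)
Fixpoint xrun (a : plan) (x : X) (pre rest : seq S) : X :=
  match rest with
  | st :: ((_ :: _) as rest') =>
      xrun a (zeta x (a (rcons pre st)) st) (rcons pre st) rest'
  | _ => x
  end.
Definition xh (a : plan) (x0 : X) (h : seq S) : X := xrun a x0 [::] h.

Definition stage (f : X -> A -> S -> R) (a : plan) (x0 : X) (h : seq S) : R :=
  if h is s0 :: h' then f (xh a x0 h) (a h) (last s0 h') else 0.

Fixpoint pchain (s : seq S) : R :=
  match s with
  | x :: ((y :: _) as s') => pi x y * pchain s'
  | _ => 1
  end.

Definition probt (s0 : S) (h : seq S) : R :=
  if h is s0' :: _ then (s0' == s0)%:R * pchain h else 0.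

(* probability of the continuation c = (s_{t+1},...,s_{t+n}) given s^t = h *)
Definition cprob (h c : seq S) : R :=
  if h is s0 :: h' then pchain (last s0 h' :: c) else pchain c.

(* E_{s_t} sum_{n>=0} beta^n f(x(s^{t+n}), a(s^{t+n}), s_{t+n}) given s^t = h *)
Definition future (f : X -> A -> S -> R) (a : plan) (x0 : X) (h : seq S) : R :=
  rsum (fun n => beta ^+ n *
    \sum_(c : n.-tuple S) cprob h c * stage f a x0 (h ++ c)).

(* actions (a(s^0),...,a(s^{t-1})) generated along s^t = h *)
Definition acts (a : plan) (h : seq S) : seq A :=
  [seq a (take k h) | k <- iota 1 (size h).-1].

Definition Ainf (x0 : X) : set plan :=
  [set a | forall (s0 : S) (s' : seq S),
      0 <= p (xh a x0 (s0 :: s')) (a (s0 :: s')) (last s0 s')].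

Definition feasible (x0 : X) (s0 : S) (a : plan) : Prop :=
  Ainf x0 a /\
  forall (s' : seq S) (i : 'I_nI), gbar i <= future (g i) a x0 (s0 :: s').

(* multipliers lambda^i(h^t), h^t = (s^t, (a_0,...,a_{t-1})) *)
Definition multipliers := 'I_nI -> seq S -> seq A -> R.

Definition Lambda (s0 : S) : set multipliers :=
  [set lam : multipliers | (forall i h u, 0 <= lam i h u) /\
     cvgn (series (fun t : nat => beta ^+ t *
        \sum_(w : t.+1.-tuple S) \sum_(u : t.-tuple A) \sum_(i < nI)
           lam i (val w) (val u) * probt s0 w))].

Definition Lagr (a : plan) (lam : multipliers) (gam : 'I_nI -> R)
    (x0 : X) (s0 : S) : R :=
  rsum (fun t : nat => beta ^+ t *
    \sum_(w : t.+1.-tuple S) probt s0 w *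
      (stage r a x0 w + \sum_(i < nI) gam i * stage (g i) a x0 w
       + \sum_(i < nI) lam i w (acts a w) * (future (g i) a x0 w - gbar i))).

Definition Dval (gam : 'I_nI -> R) (x0 : X) (s0 : S) : \bar R :=
  ereal_inf [set ereal_sup [set (Lagr a lam gam x0 s0)%:E | a in Ainf x0]
            | lam in Lambda s0].

Definition nonneg (gam : 'I_nI -> R) : Prop := forall i, 0 <= gam i.

Definition Bell (F : ('I_nI -> R) -> X -> S -> R)
    (gam : 'I_nI -> R) (x : X) (s : S) : \bar R :=
  ereal_inf [set ereal_sup
     [set (r x a s + \sum_(i < nI) (gam i * g i x a s + lam i * (g i x a s - gbar i))
           + beta * \sum_(s' : S) pi s s' * F (fun i => gam i + lam i) (zeta x a s) s')%:E
     | a in [set a : A | 0 <= p x a s]]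
   | lam in [set lam : 'I_nI -> R | nonneg lam]].

Definition supnorm (f : X -> A -> S -> R) : R :=
  sup [set y | exists x a s, y = `|f x a s|].

Definition Lconst : R :=
  (supnorm r + \sum_(i < nI) supnorm (g i)) / (1 - beta).

Definition Bk (k : nat) : set ('I_nI -> R) :=
  [set gam | nonneg gam /\ forall i, gam i <= k%:R].

Definition Linf_Bk (F : ('I_nI -> R) -> X -> S -> R) (x : X) (s : S) (k : nat) : R :=
  sup [set y | exists2 gam, Bk k gam & y = `|F gam x s|].

(* Membership in the space M, with the enumeration x_{j+1} = xe j of X and
   s_{i} = the (enum_rank s + 1)-th element of S. *)
Definition inM (xe : nat -> X) (F : ('I_nI -> R) -> X -> S -> R) : Prop :=
  (forall x s k, exists C : R, forall gam, Bk k gam -> `|F gam x s| <= C) /\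
  (forall s j, cvgn (series (fun k : nat =>
       (2%:R ^- k.+1) * Linf_Bk F (xe j) s k.+1))) /\
  (forall s, cvgn (series (fun j : nat =>
       (2%:R ^- j.+1) * rsum (fun k : nat =>
          (2%:R ^- k.+1) * Linf_Bk F (xe j) s k.+1)))).

Definition inN (xe : nat -> X) (F : ('I_nI -> R) -> X -> S -> R) : Prop :=
  inM xe F /\
  forall (x : X) (s : S),
    (forall g1 g2 (t : R), nonneg g1 -> nonneg g2 -> 0 <= t <= 1 ->
        F (fun i => t * g1 i + (1 - t) * g2 i) x s
        <= t * F g1 x s + (1 - t) * F g2 x s) /\
    (forall g1 g2, nonneg g1 -> nonneg g2 ->
        `|F g1 x s - F g2 x s| <= Lconst * \sum_(i < nI) `|g1 i - g2 i|) /\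
    (forall a, feasible x s a -> forall gam, nonneg gam ->
        future r a x [:: s] + \sum_(i < nI) gam i * future (g i) a x [:: s]
        <= F gam x s) /\
    (forall gam, nonneg gam -> F gam x s <= (1 + \sum_(i < nI) gam i) * Lconst).

End Model.

(* Main.v *)
Require Import Defs.
From mathcomp Require Import all_boot all_order all_algebra.
From mathcomp Require Import all_classical all_reals all_analysis.
From mathcomp Require Import ring lra zify.
Import numFieldNormedType.Exports.
Import Order.TTheory GRing.Theory Num.Theory.
Local Open Scope classical_set_scope.
Local Open Scope ring_scope.

Section Gen.
Variable R : realType.

Lemma big_tuple0 (T : finType) (f : seq T -> R) :
  \sum_(c : 0.-tuple T) f c = f [::].
Proof.
rewrite (eq_bigr (fun _ => f [::])); last by move=> c _; rewrite tuple0.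
by rewrite sumr_const card_tuple expn0.
Qed.

Lemma big_tuple_cons (T : finType) (n : nat) (f : seq T -> R) :
  \sum_(c : n.+1.-tuple T) f c = \sum_(x : T) \sum_(c : n.-tuple T) f (x :: c).
Proof.
rewrite pair_big /=.
rewrite (reindex (fun p : T * n.-tuple T => [tuple of p.1 :: p.2])) //=.
exists (fun c : n.+1.-tuple T => (thead c, [tuple of behead c])).
  move=> [x c] _ /=; congr pair; exact: val_inj.
by move=> c _; rewrite [c in RHS]tuple_eta.
Qed.

Lemma sum_ge0_tuple (T : finType) n (f : seq T -> R) :
  (forall c, 0 <= f c) -> 0 <= \sum_(c : n.-tuple T) f c.
Proof. by move=> h; apply: sumr_ge0 => c _; apply: h. Qed.

End Gen.

Section Chain.
Variables (R : realType) (S : finType) (pi : S -> S -> R).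
Hypothesis pi_pos : forall s s', 0 < pi s s'.
Hypothesis pi_sum : forall s, \sum_(s' : S) pi s s' = 1.

Lemma pchain_ge0 c : 0 <= pchain pi c.
Proof.
elim: c => [|x [|y c] IH] //=.
by rewrite mulr_ge0 // ltW.
Qed.

Lemma sum_pchain n s : \sum_(c : n.-tuple S) pchain pi (s :: c) = 1.
Proof.
elim: n s => [|n IH] s; first by rewrite (@big_tuple0 _ _ (fun l => pchain pi (s :: l))).
rewrite (@big_tuple_cons _ _ _ (fun l => pchain pi (s :: l))) -(pi_sum s); apply: eq_bigr => x _ /=.
by rewrite -big_distrr /= IH mulr1.
Qed.

Lemma cprob_ge0 h c : 0 <= cprob pi h c.
Proof. by case: h => [|s w]; apply: pchain_ge0. Qed.

Lemma sum_cprob n s w : \sum_(c : n.-tuple S) cprob pi (s :: w) c = 1.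
Proof. exact: sum_pchain. Qed.

Lemma cprob_step n s w (phi : seq S -> R) :
  \sum_(c : n.+1.-tuple S) cprob pi (s :: w) c * phi (w ++ c) =
  \sum_(x : S) pi (last s w) x *
     \sum_(c : n.-tuple S) cprob pi (s :: rcons w x) c * phi (rcons w x ++ c).
Proof.
rewrite (@big_tuple_cons _ _ _ (fun l => cprob pi (s :: w) l * phi (w ++ l))); apply: eq_bigr => x _; rewrite big_distrr.
apply: eq_bigr => c _ /=.
by rewrite last_rcons cat_rcons mulrA.
Qed.

Lemma cprob_step0 s w (phi : seq S -> R) :
  \sum_(c : 0.-tuple S) cprob pi (s :: w) c * phi (w ++ c) = phi w.
Proof. by rewrite (@big_tuple0 _ _ (fun l => cprob pi (s :: w) l * phi (w ++ l))) /= cats0 mul1r. Qed.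

Lemma probt_cprob t s0 (f : seq S -> R) :
  \sum_(w : t.+1.-tuple S) probt pi s0 w * f w =
  \sum_(c : t.-tuple S) cprob pi [:: s0] c * f (s0 :: c).
Proof.
rewrite (@big_tuple_cons _ _ _ (fun l => probt pi s0 l * f l)) (bigD1 s0) //=.
rewrite [X in _ + X]big1 ?addr0.
  by apply: eq_bigr => c _; rewrite eqxx mul1r.
move=> x /negbTE xs0; apply: big1 => c _.
by rewrite xs0 mul0r mul0r.
Qed.

End Chain.

Lemma cvg_series_dom (R : realType) (u v : nat -> R) :
  (forall n, `|u n| <= v n) -> cvgn (series v) -> cvgn (series u).
Proof.
move=> uv cv; apply: normed_cvg.
apply: (series_le_cvg (v_ := v)) => //.
- by move=> n; rewrite normr_ge0.
- by move=> n; exact: le_trans (uv n).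
Qed.
Arguments pchain_ge0 {R S pi}.
Arguments sum_pchain {R S pi}.
Arguments cprob_ge0 {R S pi}.
Arguments sum_cprob {R S pi}.
Arguments cprob_step {R S pi}.
Arguments cprob_step0 {R S pi}.
Arguments probt_cprob {R S pi}.
Arguments big_tuple0 {R T}.
Arguments big_tuple_cons {R T n}.

Section Kron.
Variable R : realType.

Lemma series_nd (u : nat -> R) : (forall n, 0 <= u n) ->
  {homo series u : n m / (n <= m)%N >-> n <= m}.
Proof.
move=> u0 n m nm; rewrite /series /=.
exact: (@nondecreasing_series R u xpredT 0%N (fun k _ _ => u0 k)).
Qed.

Lemma kron (beta : R) (m : nat -> R) : 0 < beta -> beta < 1 ->
  (forall t, 0 <= m t) -> cvgn (series (fun t => beta ^+ t * m t)) ->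
  (fun T => beta ^+ T * \sum_(t < T) m t) @ \oo --> 0.
Proof.
move=> b0 b1 m0 cb.
set b := fun t => beta ^+ t * m t.
set d := fun T => beta ^+ T * \sum_(t < T) m t.
have b_ge0 t : 0 <= b t by rewrite /b mulr_ge0 // exprn_ge0 // ltW.
have d_ge0 T : 0 <= d T.
  by apply: mulr_ge0; [apply: exprn_ge0; exact: ltW | apply: sumr_ge0 => t _; exact: m0].
have dS T : d T.+1 = beta * (d T + b T).
  by rewrite /d /b big_ord_recr /= exprS -mulrA mulrDr.
have PE N : series d N.+1 = beta * (series d N + series b N).
  elim: N => [|N IH].
    by rewrite /series /= big_nat1 big_geq // /d big_ord0 mulr0 big_geq // addr0 mulr0.
  rewrite [LHS]seriesSr {1}IH dS [series b N.+1]seriesSr [series d N.+1]seriesSr; ring.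
set Bt := limn (series b).
have Ble N : series b N <= Bt by apply: nondecreasing_cvgn_le => //; exact: series_nd.
have Ple N : series d N <= beta * Bt / (1 - beta).
  have h1 : series d N <= series d N.+1 by apply: series_nd => //.
  rewrite ler_pdivlMr ?subr_gt0 //.
  have := Ble N; rewrite PE in h1; nra.
apply: cvg_series_cvg_0.
apply: nondecreasing_is_cvgn; first exact: series_nd.
by exists (beta * Bt / (1 - beta)) => _ [n _ <-]; exact: Ple.
Qed.

End Kron.

Section Plan.
Variables (R : realType) (S A : finType) (X : Type) (nI : nat).
Variables (pi : S -> S -> R) (zeta : X -> A -> S -> X) (p r : X -> A -> S -> R)
  (g : 'I_nI -> X -> A -> S -> R) (gbar : 'I_nI -> R) (beta : R).
Hypothesis pi_pos : forall s s', 0 < pi s s'.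
Hypothesis pi_sum : forall s, \sum_(s' : S) pi s s' = 1.
Hypothesis beta_pos : 0 < beta.
Hypothesis beta_lt1 : beta < 1.
Variables (x0 : X) (gam0 : 'I_nI -> R) (lam : multipliers R S A nI) (a : plan S A).

Lemma xrun_rcons y pre st w x :
  xrun zeta a y pre (st :: rcons w x) =
  zeta (xrun zeta a y pre (st :: w)) (a (pre ++ st :: w)) (last st w).
Proof.
have E : forall y pre st w1 l, xrun zeta a y pre (st :: w1 :: l) =
   xrun zeta a (zeta y (a (rcons pre st)) st) (rcons pre st) (w1 :: l) by [].
elim: w y pre st => [|w1 w IH] y pre st; first by rewrite /= cats1.
by rewrite rcons_cons !E IH cat_rcons.
Qed.

Lemma xh_rcons s w x :
  xh zeta a x0 (s :: rcons w x) =
  zeta (xh zeta a x0 (s :: w)) (a (s :: w)) (last s w).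
Proof. exact: xrun_rcons. Qed.

Definition Gam (h : seq S) (i : 'I_nI) : R :=
  gam0 i + \sum_(k < (size h).-1) lam i (take k.+1 h) (acts a (take k.+1 h)).

Definition Lm (h : seq S) (i : 'I_nI) : R := lam i h (acts a h).

Lemma Gam_rcons s w x :
  Gam (s :: rcons w x) = (fun i => Gam (s :: w) i + Lm (s :: w) i).
Proof.
apply: funext => i; rewrite /Gam /= size_rcons big_ord_recr /= -addrA; congr (_ + (_ + _)).
  apply: eq_bigr => k _ /=.
  by rewrite -cats1 takel_cat // ltnW.
by rewrite -cats1 takel_cat // take_size.
Qed.

Lemma Gam1 s : Gam [:: s] = gam0.
Proof. by apply: funext => i; rewrite /Gam /= big_ord0 addr0. Qed.

Definition term (f : X -> A -> S -> R) (h : seq S) (n : nat) : R :=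
  beta ^+ n * \sum_(c : n.-tuple S) cprob pi h c * stage zeta f a x0 (h ++ c).

Definition fut f h := future pi zeta beta f a x0 h.

Lemma futE f h : fut f h = limn (series (term f h)).
Proof. by []. Qed.

Lemma term0 f s w : term f (s :: w) 0 = stage zeta f a x0 (s :: w).
Proof.
rewrite /term expr0 mul1r.
exact: (cprob_step0 s w (fun l => stage zeta f a x0 (s :: l))).
Qed.

Lemma termS f s w n :
  term f (s :: w) n.+1 = beta * \sum_(x : S) pi (last s w) x * term f (s :: rcons w x) n.
Proof.
rewrite /term exprS -mulrA; congr (_ * _).
rewrite (cprob_step n s w (fun l => stage zeta f a x0 (s :: l))).
rewrite big_distrr; apply: eq_bigr => x _.
by rewrite mulrCA.
Qed.

Section Fut.
Variable (f : X -> A -> S -> R) (Cf : R).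
Hypothesis f_bdd : forall x a s, `|f x a s| <= Cf.
Hypothesis Cf_ge0 : 0 <= Cf.

Lemma stage_bdd h : `|stage zeta f a x0 h| <= Cf.
Proof. by case: h => [|s w] /=; rewrite ?normr0. Qed.

Lemma term_bdd s w n : `|term f (s :: w) n| <= Cf * beta ^+ n.
Proof.
have bge0 : 0 <= beta ^+ n by rewrite exprn_ge0 // ltW.
rewrite /term normrM (ger0_norm bge0) mulrC; apply: ler_wpM2r => //.
apply: le_trans (ler_norm_sum _ _ _) _.
rewrite -[Cf]mulr1 -(sum_cprob pi_sum n s w) mulr_sumr.
apply: ler_sum => c _; rewrite normrM ger0_norm ?(cprob_ge0 pi_pos) // mulrC.
by rewrite ler_wpM2r ?(cprob_ge0 pi_pos) ?stage_bdd.
Qed.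

Lemma cvg_term s w : cvgn (series (term f (s :: w))).
Proof.
apply: (@cvg_series_dom _ _ (geometric Cf beta)); first exact: term_bdd.
by apply: is_cvg_geometric_series; rewrite ger0_norm ?ltW.
Qed.

Lemma fut_bdd s w : `|fut f (s :: w)| <= Cf / (1 - beta).
Proof.
have hb n : `|series (term f (s :: w)) n| <= Cf / (1 - beta).
  apply: le_trans (_ : series (geometric Cf beta) n <= _).
    rewrite /series /=; apply: le_trans (ler_norm_sum _ _ _) _.
    by apply: ler_sum => k _; apply: term_bdd.
  rewrite geometric_seriesE ?lt_eqF //= ler_pM2r ?invr_gt0 ?subr_gt0 //.
  by rewrite ler_piMr // lerBlDr lerDl exprn_ge0 ?ltW.
rewrite futE ler_norml; apply/andP; split.
  apply: limr_ge; first exact: cvg_term.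
  by apply: nearW => n; have := hb n; rewrite ler_norml => /andP[].
apply: limr_le; first exact: cvg_term.
by apply: nearW => n; have := hb n; rewrite ler_norml => /andP[].
Qed.

Lemma fut_rec s w :
  fut f (s :: w) = stage zeta f a x0 (s :: w) +
     beta * \sum_(x : S) pi (last s w) x * fut f (s :: rcons w x).
Proof.
set l := RHS.
suff H : series (term f (s :: w)) @ \oo --> l by rewrite futE (cvg_lim _ H).
rewrite -cvg_shiftS.
have -> : [sequence series (term f (s :: w)) n.+1]_n = fun n =>
   stage zeta f a x0 (s :: w) + beta * \sum_(x : S) pi (last s w) x *
     series (term f (s :: rcons w x)) n.
  apply: funext => n /=; rewrite /series /= big_nat_recl // term0; congr (_ + _).
  under eq_bigr do rewrite termS.
  rewrite -mulr_sumr; congr (_ * _); rewrite exchange_big /=.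
  by apply: eq_bigr => x _; rewrite mulr_sumr.
apply: cvgD; first exact: cvg_cst.
apply: cvgMr.
apply: (@cvg_big _ _ +%R 0 xpredT add_continuous) => x _.
apply: cvgMr; exact: cvg_term.
Qed.

End Fut.

Variable (F : ('I_nI -> R) -> X -> S -> R).

Definition Q x sx (G Lv : 'I_nI -> R) act :=
  r x act sx + \sum_(i < nI) (G i * g i x act sx + Lv i * (g i x act sx - gbar i))
  + beta * \sum_(s' : S) pi sx s' * F (fun i => G i + Lv i) (zeta x act sx) s'.

Hypothesis greedy : forall s w,
  0 <= p (xh zeta a x0 (s :: w)) (a (s :: w)) (last s w) /\
  F (Gam (s :: w)) (xh zeta a x0 (s :: w)) (last s w) <=
  Q (xh zeta a x0 (s :: w)) (last s w) (Gam (s :: w)) (Lm (s :: w)) (a (s :: w)).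

Variable Cg : R.
Hypothesis g_bdd : forall i x a s, `|g i x a s| <= Cg.
Hypothesis Cg_ge0 : 0 <= Cg.

Definition Hv s w := F (Gam (s :: w)) (xh zeta a x0 (s :: w)) (last s w)
   - \sum_(i < nI) (Gam (s :: w) i - gam0 i) * fut (g i) (s :: w).

Definition ell s w := stage zeta r a x0 (s :: w)
   + \sum_(i < nI) gam0 i * stage zeta (g i) a x0 (s :: w)
   + \sum_(i < nI) lam i (s :: w) (acts a (s :: w)) * (fut (g i) (s :: w) - gbar i).

Lemma H_step s w :
  Hv s w <= ell s w + beta * \sum_(x : S) pi (last s w) x * Hv s (rcons w x).
Proof.
have gr := (greedy s w).2.
set xx := xh zeta a x0 (s :: w) in gr *.
set act := a (s :: w) in gr *.
set sx := last s w in gr *.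
set G := Gam (s :: w) in gr *.
set L := Lm (s :: w) in gr *.
set Fp := fun x => F (Gam (s :: rcons w x)) (xh zeta a x0 (s :: rcons w x)) x.
set P := fun i => \sum_(x : S) pi sx x * fut (g i) (s :: rcons w x).
have Pdef i : fut (g i) (s :: w) = g i xx act sx + beta * P i.
  by rewrite (fut_rec (g i) Cg (g_bdd i) Cg_ge0).
have HvE x : Hv s (rcons w x) = Fp x - \sum_(i < nI) (G i + L i - gam0 i) * fut (g i) (s :: rcons w x).
  rewrite /Hv last_rcons; congr (_ - _); apply: eq_bigr => i _; by rewrite Gam_rcons.
have QE : Q xx sx G L act = r xx act sx + \sum_(i < nI) (G i * g i xx act sx + L i * (g i xx act sx - gbar i))
   + beta * \sum_(x : S) pi sx x * Fp x.
  rewrite /Q /Fp; congr (_ + _ * _); apply: eq_bigr => x _.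
  by rewrite Gam_rcons xh_rcons.
have E1 : ell s w + beta * \sum_(x : S) pi sx x * Hv s (rcons w x) =
   r xx act sx + beta * \sum_(x : S) pi sx x * Fp x +
   \sum_(i < nI) (gam0 i * g i xx act sx + L i * (g i xx act sx + beta * P i - gbar i)
                  - beta * ((G i + L i - gam0 i) * P i)).
  have A1 : \sum_(x : S) pi sx x * Hv s (rcons w x) =
     \sum_(x : S) pi sx x * Fp x - \sum_(i < nI) (G i + L i - gam0 i) * P i.
    under eq_bigr do rewrite HvE mulrBr mulr_sumr.
    rewrite big_split /= sumrN exchange_big /=; congr (_ - _).
    apply: eq_bigr => i _; rewrite /P mulr_sumr; apply: eq_bigr => x _.
    by rewrite mulrCA.
  rewrite A1 /ell.
  have E : \sum_(i < nI) lam i (s :: w) (acts a (s :: w)) * (fut (g i) (s :: w) - gbar i)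
     = \sum_(i < nI) L i * (g i xx act sx + beta * P i - gbar i).
    by apply: eq_bigr => i _; rewrite Pdef.
  have Es : stage zeta r a x0 (s :: w) = r xx act sx by [].
  have Eg : \sum_(i < nI) gam0 i * stage zeta (g i) a x0 (s :: w) =
     \sum_(i < nI) gam0 i * g i xx act sx by [].
  rewrite E Es Eg !big_split /= sumrN mulrBr -!mulr_sumr; lra.
have E2 : Q xx sx G L act - \sum_(i < nI) (G i - gam0 i) * fut (g i) (s :: w) =
   r xx act sx + beta * \sum_(x : S) pi sx x * Fp x +
   \sum_(i < nI) (G i * g i xx act sx + L i * (g i xx act sx - gbar i)
                  - (G i - gam0 i) * (g i xx act sx + beta * P i)).
  have E : \sum_(i < nI) (G i - gam0 i) * fut (g i) (s :: w) =
     \sum_(i < nI) (G i - gam0 i) * (g i xx act sx + beta * P i).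
    by apply: eq_bigr => i _; rewrite Pdef.
  rewrite QE E !big_split /= sumrN; lra.
have E3 : ell s w + beta * \sum_(x : S) pi sx x * Hv s (rcons w x) =
   Q xx sx G L act - \sum_(i < nI) (G i - gam0 i) * fut (g i) (s :: w).
  rewrite E1 E2; congr (_ + _); apply: eq_bigr => i _; ring.
rewrite E3 /Hv -/xx -/G -/sx; lra.
Qed.


Definition Lt s w t := \sum_(c : t.-tuple S) cprob pi (s :: w) c * ell s (w ++ c).

Lemma Lt0 s w : Lt s w 0 = ell s w.
Proof. exact: (cprob_step0 s w (ell s)). Qed.

Lemma LtS s w t : Lt s w t.+1 = \sum_(x : S) pi (last s w) x * Lt s (rcons w x) t.
Proof. exact: (cprob_step t s w (ell s)). Qed.

Lemma tele T : forall s w, Hv s w <= \sum_(t < T) beta ^+ t * Lt s w t +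
   beta ^+ T * \sum_(c : T.-tuple S) cprob pi (s :: w) c * Hv s (w ++ c).
Proof.
elim: T => [|T IH] s w.
  by rewrite big_ord0 add0r expr0 mul1r (cprob_step0 s w (Hv s)).
have Eq : \sum_(t < T.+1) beta ^+ t * Lt s w t + beta ^+ T.+1 *
     \sum_(c : T.+1.-tuple S) cprob pi (s :: w) c * Hv s (w ++ c)
  = ell s w + beta * \sum_(x : S) pi (last s w) x * (\sum_(t < T) beta ^+ t * Lt s (rcons w x) t
      + beta ^+ T * \sum_(c : T.-tuple S) cprob pi (s :: rcons w x) c * Hv s (rcons w x ++ c)).
  rewrite big_ord_recl expr0 mul1r Lt0 -addrA; congr (_ + _).
  under [in RHS]eq_bigr do rewrite mulrDr.
  rewrite big_split mulrDr /=; congr (_ + _).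
    under eq_bigr => t _ do rewrite (_ : bump 0 t = t.+1) // LtS exprS -mulrA mulr_sumr.
    rewrite -mulr_sumr exchange_big /=; congr (_ * _); apply: eq_bigr => x _.
    by rewrite mulr_sumr; apply: eq_bigr => t _; rewrite mulrCA.
  rewrite (cprob_step T s w (Hv s)) exprS -mulrA mulr_sumr; congr (_ * _).
  by apply: eq_bigr => x _; rewrite mulrCA.
rewrite Eq; apply: le_trans (H_step s w) _; rewrite lerD2l; apply: ler_wpM2l; first exact: ltW.
apply: ler_sum => x _; apply: ler_wpM2l; first exact: ltW (pi_pos _ _).
exact: IH.
Qed.

Lemma psiM T : forall s w,
  \sum_(c : T.-tuple S) cprob pi (s :: w) c * (\sum_(i < nI) Gam (s :: w ++ c) i) =
  \sum_(i < nI) Gam (s :: w) i + \sum_(t < T) \sum_(c : t.-tuple S)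
       cprob pi (s :: w) c * \sum_(i < nI) Lm (s :: w ++ c) i.
Proof.
elim: T => [|T IH] s w.
  by rewrite big_ord0 addr0 (cprob_step0 s w (fun l => \sum_(i < nI) Gam (s :: l) i)).
rewrite (cprob_step T s w (fun l => \sum_(i < nI) Gam (s :: l) i)).
under eq_bigr do rewrite IH Gam_rcons big_split /=.
rewrite big_ord_recl /= (cprob_step0 s w (fun l => \sum_(i < nI) Lm (s :: l) i)).
under [X in _ = _ + (_ + X)]eq_bigr => t _ do rewrite (_ : bump 0 t = t.+1) // (cprob_step t s w (fun l => \sum_(i < nI) Lm (s :: l) i)).
rewrite exchange_big /= addrA.
under eq_bigr do rewrite mulrDr.
rewrite big_split /= -big_distrl /= pi_sum mul1r; congr (_ + _).
by apply: eq_bigr => x _; rewrite mulr_sumr.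
Qed.

Variable Lc Cr : R.
Hypothesis F_ub : forall G x s, nonneg G -> F G x s <= (1 + \sum_(i < nI) G i) * Lc.
Hypothesis gam0_ge0 : nonneg gam0.
Hypothesis lam_ge0 : forall i h u, 0 <= lam i h u.
Hypothesis r_bdd : forall x a s, `|r x a s| <= Cr.
Hypothesis Cr_ge0 : 0 <= Cr.

Lemma Gam_ge h i : gam0 i <= Gam h i.
Proof. by rewrite /Gam lerDl; apply: sumr_ge0 => k _; apply: lam_ge0. Qed.

Lemma Hv_bound s w : Hv s w <= (1 + \sum_(i < nI) gam0 i) * `|Lc| +
   (`|Lc| + Cg / (1 - beta)) * \sum_(i < nI) (Gam (s :: w) i - gam0 i).
Proof.
set SG := \sum_(i < nI) gam0 i.
set D := \sum_(i < nI) (Gam (s :: w) i - gam0 i).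
set K := Cg / (1 - beta).
have SGD : \sum_(i < nI) Gam (s :: w) i = SG + D.
  have -> : D = \sum_(i < nI) Gam (s :: w) i - SG by rewrite /D /SG -sumrB.
  lra.
have nnG : nonneg (Gam (s :: w)) by move=> i; exact: le_trans (gam0_ge0 i) (Gam_ge _ i).
have h1 : F (Gam (s :: w)) (xh zeta a x0 (s :: w)) (last s w) <= (1 + (SG + D)) * `|Lc|.
  apply: le_trans (F_ub _ _ _ nnG) _; rewrite SGD; apply: ler_wpM2l; last exact: ler_norm.
  rewrite -SGD; apply: addr_ge0 => //; apply: sumr_ge0 => i _; exact: nnG.
have h2 : - \sum_(i < nI) (Gam (s :: w) i - gam0 i) * fut (g i) (s :: w) <= D * K.
  rewrite -sumrN /D mulr_suml; apply: ler_sum => i _; rewrite -mulrN; apply: ler_wpM2l.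
    by rewrite subr_ge0 Gam_ge.
  have := fut_bdd (g i) Cg (g_bdd i) Cg_ge0 s w; rewrite ler_norml => /andP[h _].
  by rewrite lerNl.
have -> : (1 + SG) * `|Lc| + (`|Lc| + K) * D = (1 + (SG + D)) * `|Lc| + D * K by ring.
rewrite /Hv; exact: lerD h1 h2.
Qed.

Lemma ell_bound s w : `|ell s w| <= (Cr + (\sum_(i < nI) gam0 i) * Cg) +
   (Cg / (1 - beta) + \sum_(i < nI) `|gbar i|) * \sum_(i < nI) Lm (s :: w) i.
Proof.
set K := Cg / (1 - beta).
set Gb := \sum_(i < nI) `|gbar i|.
have hGb i : `|gbar i| <= Gb.
  by rewrite /Gb (bigD1 i) //= lerDl; apply: sumr_ge0 => j _; exact: normr_ge0.
rewrite /ell; apply: le_trans (ler_normD _ _) _; apply: lerD.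
  apply: le_trans (ler_normD _ _) _; apply: lerD; first exact: stage_bdd.
  apply: le_trans (ler_norm_sum _ _ _) _; rewrite mulr_suml; apply: ler_sum => i _.
  by rewrite normrM ger0_norm // ler_wpM2l // stage_bdd.
apply: le_trans (ler_norm_sum _ _ _) _; rewrite mulr_sumr; apply: ler_sum => i _.
rewrite normrM ger0_norm // mulrC ler_wpM2r //.
apply: le_trans (ler_normB _ _) _; apply: lerD; last exact: hGb.
exact: fut_bdd (g i) Cg (g_bdd i) Cg_ge0 s w.
Qed.

Lemma probt_ge0 s0 w : 0 <= probt pi s0 w.
Proof.
case: w => [|x w]; first by rewrite /probt lexx.
rewrite /probt; apply: mulr_ge0; last exact: (pchain_ge0 pi_pos).
by case: (x == s0).
Qed.

Lemma size_acts (b : plan S A) h : size (acts b h) = (size h).-1.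
Proof. by rewrite /acts size_map size_iota. Qed.

Definition Efun (h : seq S) : R := stage zeta r a x0 h
  + \sum_(i < nI) gam0 i * stage zeta (g i) a x0 h
  + \sum_(i < nI) lam i h (acts a h) * (future pi zeta beta (g i) a x0 h - gbar i).

Lemma main_ineq s0 :
  cvgn (series (fun t : nat => beta ^+ t *
        \sum_(w : t.+1.-tuple S) \sum_(u : t.-tuple A) \sum_(i < nI)
           lam i (val w) (val u) * probt pi s0 w)) ->
  F gam0 x0 s0 <= Lagr pi zeta r g gbar beta a lam gam0 x0 s0.
Proof.
move=> cvLam.
set mt := fun t => \sum_(c : t.-tuple S) cprob pi [:: s0] c * \sum_(i < nI) Lm (s0 :: c) i.
have Lm_ge0 h : 0 <= \sum_(i < nI) Lm h i by apply: sumr_ge0 => i _; exact: lam_ge0.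
have mt_ge0 t : 0 <= mt t.
  by apply: sumr_ge0 => c _; rewrite mulr_ge0 ?(cprob_ge0 pi_pos).
have bge0 t : 0 <= beta ^+ t by rewrite exprn_ge0 // ltW.
have mt_le t : beta ^+ t * mt t <= beta ^+ t *
        \sum_(w : t.+1.-tuple S) \sum_(u : t.-tuple A) \sum_(i < nI)
           lam i (val w) (val u) * probt pi s0 w.
  apply: ler_wpM2l => //.
  rewrite /mt -(probt_cprob t s0 (fun w => \sum_(i < nI) Lm w i)).
  apply: ler_sum => w _.
  have szw : size (acts a w) == t by rewrite size_acts size_tuple.
  set ut : t.-tuple A := Tuple szw.
  rewrite (bigD1 ut) //= -[X in X <= _]addr0; apply: lerD.
    by rewrite mulr_sumr; apply: ler_sum => i _; rewrite mulrC.
  apply: sumr_ge0 => u _; apply: sumr_ge0 => i _.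
  by rewrite mulr_ge0 ?probt_ge0.
have cvb : cvgn (series (fun t => beta ^+ t * mt t)).
  apply: (series_le_cvg _ _ mt_le cvLam).
    by move=> t; rewrite mulr_ge0.
  move=> t; rewrite mulr_ge0 //; apply: sumr_ge0 => w _; apply: sumr_ge0 => u _.
  by apply: sumr_ge0 => i _; rewrite mulr_ge0 ?probt_ge0.
have dK := @kron R beta mt beta_pos beta_lt1 mt_ge0 cvb.
have LE : Lagr pi zeta r g gbar beta a lam gam0 x0 s0 =
   limn (series (fun t => beta ^+ t * Lt s0 [::] t)).
  rewrite /Lagr /rsum; congr (limn (series _)); apply: funext => t; congr (_ * _).
  exact: (probt_cprob t s0 Efun).
set K3 := Cr + (\sum_(i < nI) gam0 i) * Cg.
set K4 := Cg / (1 - beta) + \sum_(i < nI) `|gbar i|.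
have K4_ge0 : 0 <= K4.
  apply: addr_ge0; last by apply: sumr_ge0 => i _; exact: normr_ge0.
  by apply: divr_ge0 => //; rewrite subr_ge0 ltW.
have cvL : cvgn (series (fun t => beta ^+ t * Lt s0 [::] t)).
  apply: (@cvg_series_dom _ _ (geometric K3 beta + K4 *: (fun t => beta ^+ t * mt t))).
    move=> t; rewrite normrM ger0_norm //.
    have -> : (geometric K3 beta + K4 *: (fun t0 : nat => beta ^+ t0 * mt t0)) t =
        beta ^+ t * (K3 + K4 * mt t).
      by transitivity (K3 * beta ^+ t + K4 * (beta ^+ t * mt t)); [by [] | ring].
    apply: ler_wpM2l => //.
    rewrite /Lt; apply: le_trans (ler_norm_sum _ _ _) _.
    apply: le_trans (_ : \sum_(c : t.-tuple S) cprob pi [:: s0] c *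
        (K3 + K4 * \sum_(i < nI) Lm (s0 :: c) i) <= _).
      apply: ler_sum => c _; rewrite normrM ger0_norm ?(cprob_ge0 pi_pos) //.
      by apply: ler_wpM2l; [exact: (cprob_ge0 pi_pos) | exact: ell_bound].
    have E : \sum_(c : t.-tuple S) cprob pi [:: s0] c * (K3 + K4 * \sum_(i < nI) Lm (s0 :: c) i)
       = K3 * \sum_(c : t.-tuple S) cprob pi [:: s0] c + K4 * mt t.
      rewrite /mt !mulr_sumr -big_split; apply: eq_bigr => c _ /=; ring.
    by rewrite E (sum_cprob pi_sum) mulr1.
  apply: is_cvg_seriesD; first by apply: is_cvg_geometric_series; rewrite ger0_norm ?ltW.
  exact: is_cvg_seriesZ.
set K1 := (1 + \sum_(i < nI) gam0 i) * `|Lc|.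
set K2 := `|Lc| + Cg / (1 - beta).
set u := fun T => series (fun t => beta ^+ t * Lt s0 [::] t) T +
   (geometric K1 beta T + K2 * (beta ^+ T * \sum_(t < T) mt t)).
have cu : u @ \oo --> limn (series (fun t => beta ^+ t * Lt s0 [::] t)) + (0 + K2 * 0).
  apply: cvgD; first exact: cvL.
  apply: cvgD; first by apply: cvg_geometric; rewrite ger0_norm ?ltW.
  exact: cvgMr.
rewrite LE; have <- : lim (u @ \oo) = limn (series (fun t => beta ^+ t * Lt s0 [::] t)).
  by rewrite (cvg_lim _ cu) // mulr0 !addr0.
apply: limr_ge; first by apply/cvg_ex; eexists; exact: cu.
apply: nearW => T.
have HvE : Hv s0 [::] = F gam0 x0 s0.
  rewrite /Hv /= Gam1 big1 ?subr0 // => i _; by rewrite subrr mul0r.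
rewrite -HvE; apply: le_trans (tele T s0 [::]) _.
rewrite /u /series /= big_mkord lerD2l.
have tailb : \sum_(c : T.-tuple S) cprob pi [:: s0] c * Hv s0 ([::] ++ c) <=
    K1 + K2 * \sum_(t < T) mt t.
  apply: le_trans (_ : \sum_(c : T.-tuple S) cprob pi [:: s0] c *
     (K1 + K2 * \sum_(i < nI) (Gam (s0 :: c) i - gam0 i)) <= _).
    apply: ler_sum => c _; apply: ler_wpM2l; first exact: (cprob_ge0 pi_pos).
    exact: Hv_bound.
  have E : \sum_(c : T.-tuple S) cprob pi [:: s0] c *
       (K1 + K2 * \sum_(i < nI) (Gam (s0 :: c) i - gam0 i)) =
     K1 * \sum_(c : T.-tuple S) cprob pi [:: s0] c + K2 *
     (\sum_(c : T.-tuple S) cprob pi [:: s0] c * \sum_(i < nI) Gam (s0 :: c) i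
      - (\sum_(c : T.-tuple S) cprob pi [:: s0] c) * \sum_(i < nI) gam0 i).
    rewrite mulr_suml -sumrB !mulr_sumr -big_split; apply: eq_bigr => c _ /=.
    rewrite sumrB; ring.
  have PM := psiM T s0 [::].
  rewrite E (sum_cprob pi_sum) mulr1 mul1r PM Gam1 addrAC subrr add0r.
  exact: lexx.
have -> : K1 * beta ^+ T + K2 * (beta ^+ T * \sum_(t < T) mt t) =
   beta ^+ T * (K1 + K2 * \sum_(t < T) mt t) by ring.
apply: ler_wpM2l => //; exact: tailb.
Qed.

End Plan.

Arguments Gam {R S A nI}.
Arguments Lm {R S A nI}.

Section Construct.
Variables (R : realType) (S A : finType) (X : Type) (nI : nat).
Variables (zeta : X -> A -> S -> X) (x0 : X) (gam0 : 'I_nI -> R)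
  (lam : multipliers R S A nI) (adef : A)
  (ch : X -> S -> ('I_nI -> R) -> ('I_nI -> R) -> A).

Definition Gfun (b : plan S A) (h : seq S) : A :=
  if h is s :: w then
    ch (xh zeta b x0 (s :: w)) (last s w) (Gam gam0 lam b (s :: w)) (Lm lam b (s :: w))
  else adef.

Definition agree (b b' : plan S A) k := forall v : seq S, (size v < k)%N -> b v = b' v.

Lemma agree_le b b' j k : agree b b' k -> (j <= k)%N -> agree b b' j.
Proof. by move=> h jk v vj; apply: h; apply: leq_trans vj jk. Qed.

Lemma xrun_loc b b' : forall rest y pre, agree b b' (size pre + size rest) ->
  xrun zeta b y pre rest = xrun zeta b' y pre rest.
Proof.
elim=> [|st l IH] y pre //; case: l IH => [|st' l] IH // hag.
have E : forall c, xrun zeta c y pre [:: st, st' & l] =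
   xrun zeta c (zeta y (c (rcons pre st)) st) (rcons pre st) (st' :: l) by [].
rewrite !E hag; last by rewrite size_rcons /=; lia.
apply: IH; apply: agree_le hag _; rewrite size_rcons /=; lia.
Qed.

Lemma xh_loc b b' h : agree b b' (size h) -> xh zeta b x0 h = xh zeta b' x0 h.
Proof. by move=> hag; apply: xrun_loc. Qed.

Lemma acts_loc b b' h : agree b b' (size h) -> acts b h = acts b' h.
Proof.
move=> hag; rewrite /acts; apply/eq_in_map => k; rewrite mem_iota => /andP[k1 k2].
apply: hag; rewrite size_take; case: ifP => //; lia.
Qed.

Lemma Gam_loc b b' h : agree b b' (size h) -> Gam gam0 lam b h = Gam gam0 lam b' h.
Proof.
move=> hag; apply: funext => i; rewrite /Gam; congr (_ + _); apply: eq_bigr => k _.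
rewrite (@acts_loc b b' (take k.+1 h)) //; apply: agree_le hag _; rewrite size_take; case: ifP => //; lia.
Qed.

Lemma Lm_loc b b' h : agree b b' (size h) -> Lm lam b h = Lm lam b' h.
Proof. by move=> hag; apply: funext => i; rewrite /Lm (@acts_loc b b' h hag). Qed.

Lemma Gfun_loc b b' h : agree b b' (size h) -> Gfun b h = Gfun b' h.
Proof.
case: h => [|s w] // hag; rewrite /Gfun.
by rewrite (@xh_loc b b' _ hag) (@Gam_loc b b' _ hag) (@Lm_loc b b' _ hag).
Qed.

Fixpoint aN n : plan S A := if n is n'.+1 then Gfun (aN n') else (fun _ => adef).

Lemma aN_step n : agree (aN n.+1) (aN n) n.
Proof.
elim: n => [|n IH] v //= hv.
apply: Gfun_loc; apply: agree_le IH _; lia.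
Qed.

Lemma aN_chain n d : agree (aN (n + d)) (aN n) n.
Proof.
elim: d => [|d IH] v hv; first by rewrite addn0.
rewrite addnS aN_step ?IH //; lia.
Qed.

Definition agr : plan S A := fun h => aN (size h).+1 h.

Lemma agr_agree k : agree agr (aN k) k.
Proof.
move=> v hv; rewrite /agr.
have -> : k = ((size v).+1 + (k - (size v).+1))%N by lia.
by rewrite aN_chain //.
Qed.

Lemma agr_fix h : agr h = Gfun agr h.
Proof.
transitivity (Gfun (aN (size h)) h); first by [].
by apply: Gfun_loc => v hv; symmetry; apply: agr_agree.
Qed.

End Construct.

Theorem lemma3p7 (R : realType) (S A : finType) (X : Type) (nI : nat)
    (pi : S -> S -> R) (zeta : X -> A -> S -> X) (p r : X -> A -> S -> R)
    (g : 'I_nI -> X -> A -> S -> R) (gbar : 'I_nI -> R) (beta : R)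
    (xe : nat -> X)
    (pi_pos : forall s s', 0 < pi s s')
    (pi_sum : forall s, \sum_(s' : S) pi s s' = 1)
    (beta_pos : 0 < beta) (beta_lt1 : beta < 1)
    (r_bdd : exists C : R, forall x a s, `|r x a s| <= C)
    (g_bdd : forall i, exists C : R, forall x a s, `|g i x a s| <= C)
    (xe_onto : forall x : X, exists j, xe j = x)
    (standing : forall (x0 : X) (s0 : S),
        exists a, feasible pi zeta p g gbar beta x0 s0 a)
    (F : ('I_nI -> R) -> X -> S -> R)
    (FN : inN pi zeta p r g gbar beta xe F)
    (Ffix : forall gam x s, nonneg gam ->
        Bell pi zeta p r g gbar beta F gam x s = (F gam x s)%:E) :
  forall gam x s, nonneg gam ->
    ((F gam x s)%:E <= Dval pi zeta p r g gbar beta gam x s)%E.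
Proof.
move=> gam x s gam_nn.
have [Cr0 hCr0] := r_bdd.
set Cr := `|Cr0|.
have r_bdd' : forall x a s, `|r x a s| <= Cr.
  by move=> x' a' s'; apply: le_trans (hCr0 x' a' s') (ler_norm _).
have Cr_ge0 : 0 <= Cr by apply: normr_ge0.
set Cgf := fun i => projT1 (cid (g_bdd i)).
have hCgf i : forall x a s, `|g i x a s| <= Cgf i := projT2 (cid (g_bdd i)).
set Cg := \sum_(i < nI) `|Cgf i|.
have g_bdd' : forall i x a s, `|g i x a s| <= Cg.
  move=> i x' a' s'; apply: le_trans (hCgf i x' a' s') _.
  apply: le_trans (ler_norm _) _.
  by rewrite /Cg (bigD1 i) //= lerDl; apply: sumr_ge0 => j _; exact: normr_ge0.
have Cg_ge0 : 0 <= Cg by apply: sumr_ge0 => j _; exact: normr_ge0.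
have F_ub : forall G x s, nonneg G -> F G x s <= (1 + \sum_(i < nI) G i) * Lconst r g beta.
  move=> G x' s' hG; case: FN => _ FN'.
  by have [_ [_ [_ iv]]] := FN' x' s'; exact: iv.
pose adef : A := projT1 (cid (standing x s)) [::].
have chex : forall x' sx (G Lv : 'I_nI -> R), exists act : A,
   (nonneg G -> nonneg Lv -> 0 <= p x' act sx /\
      F G x' sx <= Q R S A X nI pi zeta r g gbar beta F x' sx G Lv act).
  move=> x' sx G Lv.
  case: (pselect (exists act, 0 <= p x' act sx /\
      F G x' sx <= Q R S A X nI pi zeta r g gbar beta F x' sx G Lv act)) => [[act hact]|hno].
    by exists act.
  case: (pselect (nonneg G /\ nonneg Lv)) => [[hG hL]|hnn]; last first.
    by exists adef => hG hL; exfalso; apply: hnn.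
  exfalso.
  have hlt : forall act, 0 <= p x' act sx ->
      Q R S A X nI pi zeta r g gbar beta F x' sx G Lv act < F G x' sx.
    move=> act hp; rewrite ltNge; apply/negP => hle; apply: hno; exists act; split => //.
  have M_lt : (\big[Order.max/-oo%E]_(act | (0 <= p x' act sx)%R)
      (Q R S A X nI pi zeta r g gbar beta F x' sx G Lv act)%:E < (F G x' sx)%:E)%E.
    apply: bigmax_lt; first exact: ltNyr.
    by move=> act hp; rewrite lte_fin hlt.
  have B_le : (Bell pi zeta p r g gbar beta F G x' sx <=
      \big[Order.max/-oo%E]_(act | (0 <= p x' act sx)%R)
      (Q R S A X nI pi zeta r g gbar beta F x' sx G Lv act)%:E)%E.
    apply: (@le_trans _ _ (ereal_sup [set (Q R S A X nI pi zeta r g gbar beta F x' sx G Lv act)%:E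
        | act in [set act | 0 <= p x' act sx]])).
      by apply: ereal_inf_lbound; exists Lv.
    apply: ge_ereal_sup => _ [act hp <-].
    exact: (@le_bigmax_cond _ _ _ _ _ (fun act => 0 <= p x' act sx)).
  rewrite (Ffix G x' sx hG) in B_le.
  by have := lt_le_trans M_lt B_le; rewrite ltxx.
pose ch := fun x' sx G Lv => projT1 (cid (chex x' sx G Lv)).
have chP : forall x' sx G Lv, nonneg G -> nonneg Lv -> 0 <= p x' (ch x' sx G Lv) sx /\
      F G x' sx <= Q R S A X nI pi zeta r g gbar beta F x' sx G Lv (ch x' sx G Lv).
  by move=> x' sx G Lv; exact: (projT2 (cid (chex x' sx G Lv))).
rewrite /Dval; apply: le_ereal_inf_tmp => _ [lam0 [lam_ge0 cvLam] <-].
pose a := agr R S A X nI zeta x gam lam0 adef ch.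
have greedy : forall s' w,
  0 <= p (xh zeta a x (s' :: w)) (a (s' :: w)) (last s' w) /\
  F (Gam gam lam0 a (s' :: w)) (xh zeta a x (s' :: w)) (last s' w) <=
  Q R S A X nI pi zeta r g gbar beta F (xh zeta a x (s' :: w)) (last s' w)
    (Gam gam lam0 a (s' :: w)) (Lm lam0 a (s' :: w)) (a (s' :: w)).
  move=> s' w.
  have E : a (s' :: w) = ch (xh zeta a x (s' :: w)) (last s' w)
      (Gam gam lam0 a (s' :: w)) (Lm lam0 a (s' :: w)).
    exact: (@agr_fix R S A X nI zeta x gam lam0 adef ch (s' :: w)).
  rewrite E; apply: chP.
    by move=> i; apply: le_trans (gam_nn i) (@Gam_ge R S A nI gam lam0 a lam_ge0 _ i).
  by move=> i; apply: lam_ge0.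
apply: (@le_trans _ _ (Lagr pi zeta r g gbar beta a lam0 gam x s)%:E).
  rewrite lee_fin.
  exact: (@main_ineq R S A X nI pi zeta p r g gbar beta pi_pos pi_sum beta_pos beta_lt1
            x gam lam0 a F greedy Cg g_bdd' Cg_ge0 (Lconst r g beta) Cr F_ub gam_nn
            lam_ge0 r_bdd' Cr_ge0 s cvLam).
apply: ereal_sup_ubound; exists a => //.
by move=> s' w; exact: (greedy s' w).1.
Qed.
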